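(* Let $T=(G,N,\psi)$ be a triple and $T'=(G',N',\psi')$ a linear reduction of $T$, with center $Z'=Z(T')$ and central character $\zeta'$. Then $G'=G(\zeta')$, $N'=N(\zeta')$, and $\psi'$ is the unique irreducible character of $N'$ lying above $\zeta'$ and inducing $\psi$. If moreover $T'$ is a linear limit of $T$ and $N'/Z(T')$ is nilpotent, then $\psi'$ is the only irreducible character of $N'$ lying above $\zeta'$.
   Context: $\mathrm{Irr}(X)$, $\mathrm{Lin}(X)$: complex irreducible, resp. linear, characters of a finite group $X$; $K(\phi)$ is the stabilizer of $\phi$ in $K$. A triple is $T=(G,N,\psi)$ with $G$ finite, $N\trianglelefteq G$, $\psi\in\mathrm{Irr}(N)$. The center $Z(T)$ is the center $Z(\psi^G)=\{g\in G:|\psi^G(g)|=\psi^G(1)\}$ of the induced character $\psi^G$ (a normal subgroup of $G$ contained in $N$), and the central character $\zeta^{(T)}$ is the unique linear character of $Z(T)$ lying under $\psi^G$. If $L\trianglelefteq G$, $L\le N$, and $\lambda\in\mathrm{Lin}(L)$ lies under $\psi$, the direct linear reduction $T(\lambda)$ is $(G(\lambda),N(\lambda),\psi_\lambda)$, where $\psi_\lambda$ is the $\lambda$-Clifford correspondent of $\psi$ (the unique irreducible character of $N(\lambda)$ over $\lambda$ inducing $\psi$); it is proper if $T(\lambda)\neq T$. A linear reduction of $T$ is a triple obtained from $T$ by a finite chain of direct linear reductions; a linear limit is a linear reduction admitting no proper direct linear reduction. *)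

(* Defs.v *)
From HB Require Import structures.
From mathcomp Require Import all_boot all_order all_algebra all_fingroup all_solvable all_field all_character.
Set Implicit Arguments. Unset Strict Implicit. Unset Printing Implicit Defensive.
Import GRing.Theory Num.Theory.
Local Open Scope ring_scope.

Record triple (gT : finGroupType) := Triple {
  tG : {group gT};
  tN : {group gT};
  tpsi : 'CF(tN)
}.

Definition is_triple (gT : finGroupType) (T : triple gT) : Prop :=
  (tN T <| tG T)%g /\ tpsi T \in irr (tN T).

Definition lies_under (gT : finGroupType) (L H : {group gT})
  (lam : 'CF(L)) (chi : 'CF(H)) : Prop :=
  '['Res[L] chi, lam] != 0.

Definition tcenter (gT : finGroupType) (T : triple gT) : {group gT} :=
  ('Z('Ind[tG T] (tpsi T))%CF)%G.

(* Direct linear reduction: T' = T(lam) for some linear lam of some L <| G,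
   L <= N, lying under psi; psi' is the lam-Clifford correspondent of psi,
   i.e. the (unique) irreducible character of N(lam) over lam inducing psi. *)
Definition direct_linred (gT : finGroupType) (T T' : triple gT) : Prop :=
  exists (L : {group gT}) (lam : 'CF(L)),
    [/\ (L <| tG T)%g, L \subset tN T, lam \is a linear_char,
        lies_under lam (tpsi T) &
        [/\ tG T' :=: 'I_(tG T)[lam]%g,
        tN T' :=: 'I_(tN T)[lam]%g, tpsi T' \in irr (tN T'), lies_under lam (tpsi T')
          & 'Ind[tN T] (tpsi T') = tpsi T]].

Inductive linred (gT : finGroupType) (T : triple gT) : triple gT -> Prop :=
| linred_refl : linred T T
| linred_step T1 T2 : linred T T1 -> direct_linred T1 T2 -> linred T T2.

Definition linear_limit (gT : finGroupType) (T T' : triple gT) : Prop :=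
  linred T T' /\ forall T'' : triple gT, direct_linred T' T'' -> T'' = T'.

(* Main.v *)
Require Import Defs.
From HB Require Import structures.
From mathcomp Require Import all_boot all_order all_algebra all_fingroup all_solvable all_field all_character.
Set Implicit Arguments. Unset Strict Implicit. Unset Printing Implicit Defensive.
Import GRing.Theory Num.Theory.
Local Open Scope ring_scope.

Section Helpers.
Variable gT : finGroupType.
Implicit Types G H K L M N Y Z Gp Np Hn : {group gT}.

Lemma commMgJ' (x y z : gT) : ([~ x * y, z] = [~ x, z] ^ y * [~ y, z])%g.
Proof.
rewrite !commgEl conjMg invMg !conjgE !mulgA; by rewrite !mulgK.
Qed.

Lemma scal_of_constt H (phi zeta : 'CF(H)) : zeta \is a linear_char ->
  (forall i, i \in irr_constt phi -> 'chi_i = zeta) -> phi = phi 1%g *: zeta.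
Proof.
move=> Lz hc.
have E: phi = (\sum_(i in irr_constt phi) '[phi, 'chi_i]) *: zeta.
  rewrite {1}[phi]cfun_sum_constt scaler_suml; apply: eq_bigr => i Hi.
  by rewrite hc.
by rewrite {2}E cfunE lin_char1 // mulr1 -E.
Qed.

Lemma lin_constt_eq H (zeta : 'CF(H)) (c : algC) i :
  zeta \is a linear_char -> i \in irr_constt (c *: zeta) -> 'chi_i = zeta.
Proof.
move=> Lz; have /irrP[k Dk] := lin_char_irr Lz; rewrite Dk.
rewrite irr_consttE cfdotZl cfdot_irr mulf_eq0 negb_or pnatr_eq0 eqb0 negbK.
by case/andP=> _ /eqP->.
Qed.

Lemma res_scal_trans M H Z (chi : 'CF(M)) (zeta : 'CF(Z)) j :
  chi \is a character -> Z \subset H -> H \subset M -> zeta \is a linear_char ->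
  'Res[Z] chi = chi 1%g *: zeta -> j \in irr_constt ('Res[H] chi) ->
  'Res[Z] 'chi[H]_j = 'chi_j 1%g *: zeta.
Proof.
move=> Nchi sZH sHM Lz Dchi Hj.
rewrite -[X in X *: _](cfRes1 Z); apply: scal_of_constt => // i Hi.
have := constt_Res_trans (cfRes_char H Nchi) Hj Hi.
rewrite cfResRes // Dchi; exact: lin_constt_eq.
Qed.

Lemma res_scal_mul M Z (chi : 'CF(M)) (zeta : 'CF(Z)) x z :
  chi \is a character -> Z \subset M -> zeta \is a linear_char ->
  'Res[Z] chi = chi 1%g *: zeta -> x \in M -> z \in Z ->
  chi (x * z)%g = zeta z * chi x.
Proof.
move=> Nchi sZM Lz Dchi Mx Zz.
have Mz := subsetP sZM z Zz.
have chiz : chi z = chi 1%g * zeta z by rewrite -(cfResE chi sZM Zz) Dchi cfunE.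
have n1 : `|zeta z| = 1 := normC_lin_char Lz Zz.
have c1 : `|chi 1%g| = chi 1%g by rewrite ger0_norm // char1_ge0.
have zZ : z \in 'Z(chi)%CF by rewrite char_cfcenterE // chiz normrM n1 mulr1 c1.
have := Nchi; case/char_reprP => rG Dc.
move: zZ; rewrite Dc cfcenter_repr => /setIdP[_ /is_scalar_mxP[c rGz]].
move: chiz; rewrite Dc !cfunE Mz groupM // Mx !mulrb repr_mxM // rGz.
rewrite mul_mx_scalar mxtraceZ mxtrace_scalar group1 repr_mx1 mxtrace1.
case: rG rGz Dc => n rG /= rGz Dc.
have [n0|n0] := posnP n.
  by move=> _; move: (rG x); rewrite n0 => A; rewrite [A]flatmx0 mxtrace0 !mulr0.
have nz : (n%:R : algC) != 0 by rewrite pnatr_eq0 -lt0n.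
move=> h; suff -> : c = zeta z by []. apply: (mulfI nz); by rewrite mulr_natl h.
Qed.

Lemma ind_center_val Gp Np Y (psi : 'CF(Np)) (nu : 'CF(Y)) y :
  (Y <| Gp)%g -> Y \subset Np -> Np \subset Gp -> (Gp \subset 'I[nu])%g ->
  'Res[Y] psi = psi 1%g *: nu -> y \in Y ->
  'Ind[Gp] psi y = 'Ind[Gp] psi 1%g * nu y.
Proof.
move=> /andP[sYG nYG] sYN sNG sGI Dpsi Yy.
rewrite !cfIndE // -mulrA; congr (_ * _); rewrite mulr_suml.
apply: eq_bigr => g Gg; rewrite conj1g.
have Yyg : (y ^ g)%g \in Y by rewrite memJ_norm // (subsetP nYG).
rewrite -(cfResE psi sYN Yyg) Dpsi cfunE; congr (_ * _).
exact: inertia_valJ (subsetP sGI g Gg).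
Qed.

Lemma ind_center_sub Gp Np Y (psi : 'CF(Np)) (nu : 'CF(Y)) :
  psi \is a character -> nu \is a linear_char ->
  (Y <| Gp)%g -> Y \subset Np -> Np \subset Gp -> (Gp \subset 'I[nu])%g ->
  'Res[Y] psi = psi 1%g *: nu -> Y \subset 'Z('Ind[Gp] psi)%CF.
Proof.
move=> Npsi Lnu nsYG sYN sNG sGI Dpsi; apply/subsetP=> y Yy.
have Gy : y \in Gp by rewrite (subsetP (subset_trans sYN sNG)).
rewrite char_cfcenterE ?cfInd_char // (ind_center_val nsYG sYN sNG sGI Dpsi Yy).
by rewrite normrM (normC_lin_char Lnu Yy) mulr1 ger0_norm // char1_ge0 ?cfInd_char.
Qed.

Lemma res_invariant_scal Hn Gp (theta : 'CF(Hn)) (chi : 'CF(Gp)) :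
  (Hn <| Gp)%g -> (Gp \subset 'I[theta])%g -> theta \is a linear_char -> chi \in irr Gp ->
  '['Res[Hn] chi, theta] != 0 -> 'Res[Hn] chi = chi 1%g *: theta.
Proof.
move=> nsHG sGI Lt /irrP[i ->]; have /irrP[k Dk] := lin_char_irr Lt.
rewrite Dk => nz.
have E := Clifford_Res_sum_cfclass nsHG nz.
rewrite -Dk cfclass_invariant // big_seq1 in E.
have h := congr1 (fun f : 'CF(Hn) => f 1%g) E; rewrite /= cfRes1 cfunE in h. rewrite (lin_char1 Lt) mulr1 in h.
by rewrite {1}E -Dk -h.
Qed.

Lemma central_char Gp (X : 'CF(Gp)) (zeta : 'CF('Z(X)%CF)) :
  X \is a character -> zeta \is a linear_char ->
  '['Res['Z(X)%CF] X, zeta] != 0 -> 'Res['Z(X)%CF] X = X 1%g *: zeta.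
Proof.
move=> NX Lz nz; have [c1 Lc1 Dc] := cfcenter_Res X.
have /irrP[k Dk] := lin_char_irr Lz.
have: k \in irr_constt ('Res['Z(X)%CF] X) by rewrite irr_consttE -Dk.
by rewrite Dc => /(lin_constt_eq Lc1); rewrite -Dk => ->.
Qed.


Lemma center_subN Gp Np (psi : 'CF(Np)) :
  (Np <| Gp)%g -> psi \in irr Np -> 'Z('Ind[Gp] psi)%CF \subset Np.
Proof.
move=> /andP[sNG nNG] /irrP[i ->]; apply/subsetP=> z Zz.
have Gz : z \in Gp := subsetP (cfcenter_sub _) z Zz.
apply: contraLR Zz => Nz.
rewrite char_cfcenterE ?cfInd_char ?irr_char //.
have -> : 'Ind[Gp] 'chi_i z = 0.
  rewrite cfIndE // big1 ?mulr0 // => y Gy; apply: cfun0.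
  by rewrite memJ_norm // (subsetP nNG).
rewrite normr0 eq_sym cfInd1 // mulf_eq0 negb_or irr1_neq0 andbT.
by rewrite pnatr_eq0 -lt0n indexg_gt0.
Qed.

Lemma Ind1_neq0 Gp Np (psi : 'CF(Np)) :
  Np \subset Gp -> psi \in irr Np -> 'Ind[Gp] psi 1%g != 0.
Proof.
move=> sNG /irrP[i ->]; rewrite cfInd1 // mulf_eq0 negb_or irr1_neq0 andbT.
by rewrite pnatr_eq0 -lt0n indexg_gt0.
Qed.

Lemma central_inertia Gp Np (psi : 'CF(Np)) (zeta : 'CF('Z('Ind[Gp] psi)%CF)) :
  (Np <| Gp)%g -> psi \in irr Np ->
  'Res['Z('Ind[Gp] psi)%CF] ('Ind[Gp] psi) = 'Ind[Gp] psi 1%g *: zeta ->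
  (Gp \subset 'I[zeta])%g.
Proof.
move=> nsNG irrpsi Dz; apply/subsetP=> g Gg.
have nZg : g \in 'N('Z('Ind[Gp] psi)%CF)%g.
  exact: subsetP (normal_norm (cfcenter_normal _)) g Gg.
rewrite inE nZg /=; apply/eqP.
have E : ('Res['Z('Ind[Gp] psi)%CF] ('Ind[Gp] psi) ^ g)%CF
          = 'Res['Z('Ind[Gp] psi)%CF] ('Ind[Gp] psi).
  by rewrite (cfConjgRes_norm _ nZg (subsetP (normG Gp) g Gg)) cfConjg_id.
rewrite Dz linearZ /= in E.
exact: scalerI (Ind1_neq0 (normal_sub nsNG) irrpsi) _ _ E.
Qed.

Lemma central_res Gp Np (psi : 'CF(Np)) (zeta : 'CF('Z('Ind[Gp] psi)%CF)) :
  (Np <| Gp)%g -> psi \in irr Np -> zeta \is a linear_char ->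
  'Res['Z('Ind[Gp] psi)%CF] ('Ind[Gp] psi) = 'Ind[Gp] psi 1%g *: zeta ->
  'Res['Z('Ind[Gp] psi)%CF] psi = psi 1%g *: zeta.
Proof.
move=> nsNG irrpsi Lz Dz; have /irrP[j Dj] := irrpsi.
have h : j \in irr_constt ('Res[Np] ('Ind[Gp] psi)).
  rewrite irr_consttE cfdot_Res_l {1}Dj cfnorm_eq0.
  by apply: Ind_irr_neq0; exact: normal_sub.
have := res_scal_trans (cfInd_char Gp (irrWchar irrpsi)) (center_subN nsNG irrpsi) (normal_sub nsNG) Lz Dz h.
by rewrite -Dj.
Qed.

Lemma res_central Gp Np Y (psi : 'CF(Np)) (nu : 'CF(Y)) (zeta : 'CF('Z('Ind[Gp] psi)%CF)) :
  psi \in irr Np -> nu \is a linear_char ->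
  (Y <| Gp)%g -> Y \subset Np -> Np \subset Gp -> (Gp \subset 'I[nu])%g ->
  'Res[Y] psi = psi 1%g *: nu ->
  'Res['Z('Ind[Gp] psi)%CF] ('Ind[Gp] psi) = 'Ind[Gp] psi 1%g *: zeta ->
  Y \subset 'Z('Ind[Gp] psi)%CF /\ 'Res[Y] zeta = nu.
Proof.
move=> irrpsi Lnu nsYG sYN sNG sGI Dpsi Dz.
have sYZ := ind_center_sub (irrWchar irrpsi) Lnu nsYG sYN sNG sGI Dpsi.
split=> //; apply/cfun_inP=> y Yy.
have h := ind_center_val nsYG sYN sNG sGI Dpsi Yy.
rewrite (cfResE _ sYZ Yy); rewrite -(cfResE ('Ind[Gp] psi) (cfcenter_sub _) (subsetP sYZ y Yy)) Dz cfunE in h.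
by apply: (mulfI (Ind1_neq0 sNG irrpsi)); rewrite -h.
Qed.

End Helpers.


Section Chain.
Variable gT : finGroupType.
Implicit Types G H K L M N Y Z Gp Np Hn : {group gT}.

Definition central_chr (T : triple gT) (zeta : 'CF(tcenter T)) :=
  zeta \is a linear_char /\
  'Res[tcenter T] ('Ind[tG T] (tpsi T)) = 'Ind[tG T] (tpsi T) 1%g *: zeta.
Arguments central_chr : clear implicits.

Lemma central_exists (T : triple gT) : exists zeta, central_chr T zeta.
Proof.
have [c Lc Dc] := cfcenter_Res ('Ind[tG T] (tpsi T)).
by exists c.
Qed.

Definition Inv (T T' : triple gT) : Prop :=
  [/\ is_triple T', tG T' \subset tG T, tN T' :=: tN T :&: tG T',
      'Ind[tN T] (tpsi T') = tpsi T &
      ((forall zeta, central_chr T' zeta ->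
       forall (Y : {group gT}) (nu : 'CF(Y)) g,
         tcenter T' \subset Y -> 'Res[tcenter T'] nu = zeta ->
         g \in tG T -> g \in 'N(Y)%g -> (nu ^ g)%CF = nu -> g \in tG T') /\
      (forall zeta, central_chr T' zeta ->
       forall chi : 'CF(tN T'), chi \in irr (tN T') ->
         'Res[tcenter T'] chi = chi 1%g *: zeta ->
         'Ind[tN T] chi = tpsi T -> chi = tpsi T'))].

Lemma Inv_refl (T : triple gT) : is_triple T -> Inv T T.
Proof.
move=> wT; split=> //; last split.
- by rewrite (setIidPl (normal_sub wT.1)).
- exact: cfInd_id.
- by move=> zeta _ Y nu g _ _ Gg.
by move=> zeta _ chi _ _; rewrite cfInd_id.
Qed.


Lemma Inv_step (T T1 T2 : triple gT) : Inv T T1 -> direct_linred T1 T2 -> Inv T T2.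
Proof.
case: T1 => G1 N1 psi1; case: T2 => G2 N2 psi2.
case=> [[/= nsN1 irr1] /= sG1 eN1 Ind1 [I1 II1]].
case=> L [lam [/= nsLG1 sLN1 Llam ulam [/= eG2 eN2 irr2 ulam2 Ind2]]].
have /irrP[t Dt] := lin_char_irr Llam; subst lam.
have eG : G2 = ('I_G1['chi_t])%G by apply: group_inj.
have eN : N2 = ('I_N1['chi_t])%G by apply: group_inj.
subst G2 N2.
have sN1G1 := normal_sub nsN1.
have sLG1 := subset_trans sLN1 sN1G1.
have sG2G1 : 'I_G1['chi_t]%g \subset G1 := subsetIl _ _.
have sN2N1 : 'I_N1['chi_t]%g \subset N1 := subsetIl _ _.
have sN2I : 'I_N1['chi_t]%g \subset 'I['chi_t]%g := subsetIr _ _.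
have sG2I : 'I_G1['chi_t]%g \subset 'I['chi_t]%g := subsetIr _ _.
have sN2G2 : 'I_N1['chi_t]%g \subset 'I_G1['chi_t]%g := setSI _ sN1G1.
have nsN2 : ('I_N1['chi_t] <| 'I_G1['chi_t])%g.
  have := normalGI sG2G1 nsN1.
  by rewrite setIAC (setIidPr sN1G1).
have sLN2 : L \subset 'I_N1['chi_t]%g by rewrite subsetI sLN1 sub_inertia.
have nsLN2 : (L <| 'I_N1['chi_t])%g := normalS sLN2 (subset_trans sN2N1 sN1G1) nsLG1.
have nsLG2 : (L <| 'I_G1['chi_t])%g := normalS (subset_trans sLN2 sN2G2) sG2G1 nsLG1.
have nsLN1 : (L <| N1)%g := normalS sLN1 sN1G1 nsLG1.
have RL2 : 'Res[L] psi2 = psi2 1%g *: 'chi_t := res_invariant_scal nsLN2 sN2I Llam irr2 ulam2.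
have sN1N : N1 \subset tN T by rewrite eN1 subsetIl.
have key : forall zeta2, central_chr (@Triple gT ('I_G1['chi_t])%G ('I_N1['chi_t])%G psi2) zeta2 ->
  exists zeta1, [/\ central_chr (@Triple gT G1 N1 psi1) zeta1,
     'Z('Ind[G1] psi1)%CF \subset 'Z('Ind['I_G1['chi_t]] psi2)%CF,
     'Res['Z('Ind[G1] psi1)%CF] zeta2 = zeta1,
     L \subset 'Z('Ind['I_G1['chi_t]] psi2)%CF & 'Res[L] zeta2 = 'chi_t].
  move=> zeta2 [Lz2 Dz2].
  have [zeta1 [Lz1 Dz1]] := central_exists (@Triple gT G1 N1 psi1).
  rewrite /= in zeta1 Lz1 Dz1 *.
  exists zeta1.
  have sGI1 := central_inertia nsN1 irr1 Dz1.
  have RZ1 := central_res nsN1 irr1 Lz1 Dz1.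
  have sZ1N1 := center_subN nsN1 irr1.
  have nsZ1 : ('Z('Ind[G1] psi1)%CF <| G1)%g := cfcenter_normal _.
  have nZ1G1 := normal_norm nsZ1.
  have nLG1 := normal_norm nsLG1.
  have RLZ : 'Res[(L :&: 'Z('Ind[G1] psi1)%CF)%G] 'chi_t
             = 'Res[(L :&: 'Z('Ind[G1] psi1)%CF)%G] zeta1.
    have hR : 'Res[(L :&: 'Z('Ind[G1] psi1)%CF)%G] psi1
              = psi1 1%g *: 'Res[(L :&: 'Z('Ind[G1] psi1)%CF)%G] zeta1.
      by rewrite -(cfResRes psi1 (subsetIr L _) sZ1N1) RZ1 linearZ.
    have := res_scal_trans (irrWchar irr1) (subsetIl _ _) sLN1 (cfRes_lin_char _ Lz1) hR ulam.
    by rewrite (lin_char1 Llam) scale1r.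
  have sZ1N2 : 'Z('Ind[G1] psi1)%CF \subset 'I_N1['chi_t]%g.
    apply/subsetP=> z Zz.
    have Gz : z \in G1 := subsetP (cfcenter_sub _) z Zz.
    rewrite inE (subsetP sZ1N1 z Zz) /= inE (subsetP nLG1 z Gz) /=.
    apply/eqP/cfun_inP=> l Ll.
    rewrite cfConjgE ?(subsetP nLG1) //.
    have Zw : (z^-1)%g \in 'Z('Ind[G1] psi1)%CF by rewrite groupV.
    have Gw : (z^-1)%g \in G1 by rewrite groupV.
    have Gl : l \in G1 := subsetP sLG1 l Ll.
    have Elw : (l ^ z^-1 = l * [~ l, z^-1])%g by rewrite commgEl mulKVg.
    have Lc : ([~ l, z^-1])%g \in L.
      by rewrite commgEl groupM ?groupV // memJ_norm // (subsetP nLG1).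
    have Zc : ([~ l, z^-1])%g \in 'Z('Ind[G1] psi1)%CF.
      by rewrite commgEr groupM // memJ_norm ?groupV // (subsetP nZ1G1).
    have LZc : ([~ l, z^-1])%g \in (L :&: 'Z('Ind[G1] psi1)%CF)%G by rewrite inE Lc Zc.
    have Hc : 'chi_t ([~ l, z^-1])%g = 1.
      rewrite -(cfResE 'chi_t (subsetIl _ _) LZc) RLZ cfResE ?subsetIr //.
      rewrite commgEr lin_charM // ?memJ_norm ?groupV ?(subsetP nZ1G1) //.
      rewrite (inertia_valJ _ (subsetP sGI1 l Gl)) -lin_charM ?groupV //.
      by rewrite mulVg lin_char1.
    by rewrite Elw lin_charM // Hc mulr1.
  have RZ12 : 'Res['Z('Ind[G1] psi1)%CF] psi2 = psi2 1%g *: zeta1.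
    have /irrP[j Dj] := irr2.
    have hj : j \in irr_constt ('Res['I_N1['chi_t]%G] psi1).
      by rewrite irr_consttE cfdot_Res_l -Dj Ind2 irrWnorm ?oner_eq0.
    have := res_scal_trans (irrWchar irr1) sZ1N2 sN2N1 Lz1 RZ1 hj.
    by rewrite -Dj.
  have nsZ1G2 : ('Z('Ind[G1] psi1)%CF <| 'I_G1['chi_t])%g.
    exact: normalS (subset_trans sZ1N2 sN2G2) sG2G1 nsZ1.
  have [sZ12 R12] := res_central irr2 Lz1 nsZ1G2 sZ1N2 sN2G2 (subset_trans sG2G1 sGI1) RZ12 Dz2.
  have [sLZ2 RL] := res_central irr2 Llam nsLG2 sLN2 sN2G2 sG2I RL2 Dz2.
  by split.
have sZ2N2 := center_subN nsN2 irr2.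
split=> //=.
- exact: subset_trans sG2G1 sG1.
- by rewrite eN1 -setIA.
- by rewrite -(cfIndInd _ sN1N sN2N1) Ind2.
split.
- move=> zeta2 cz2 Y nu g sZ2Y Rnu Gg nYg nug.
  have [zeta1 [cz1 sZ12 RZ12 sLZ2 RL]] := key zeta2 cz2.
  have G1g : g \in G1.
    apply: (I1 zeta1 cz1 Y nu g _ _ Gg nYg nug); first exact: subset_trans sZ12 sZ2Y.
    by rewrite -(cfResRes nu sZ12 sZ2Y) Rnu.
  have nLg : g \in 'N(L)%g := subsetP (normal_norm nsLG1) g G1g.
  rewrite inE G1g inE nLg /=; apply/eqP.
  have RLn : 'Res[L] nu = 'chi_t by rewrite -(cfResRes nu sLZ2 sZ2Y) Rnu.
  by rewrite -RLn cfConjgRes_norm // nug.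
move=> zeta2 cz2 chi irrchi Rchi Indchi.
have [zeta1 [cz1 sZ12 RZ12 sLZ2 RL]] := key zeta2 cz2.
have [Lz1 Dz1] := cz1.
rewrite /= in zeta1 Lz1 Dz1 RZ12 sZ12 cz1.
have sGI1 := central_inertia nsN1 irr1 Dz1.
have sZ1N1 := center_subN nsN1 irr1.
have nsZ1 : ('Z('Ind[G1] psi1)%CF <| G1)%g := cfcenter_normal _.
have sZ1N2 := subset_trans sZ12 sZ2N2.
have RLc : 'Res[L] chi = chi 1%g *: 'chi_t.
  by rewrite -(cfResRes chi sLZ2 sZ2N2) Rchi linearZ /= RL.
have RZ1c : 'Res['Z('Ind[G1] psi1)%CF] chi = chi 1%g *: zeta1.
  by rewrite -(cfResRes chi sZ12 sZ2N2) Rchi linearZ /= RZ12.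
have [cA cB _ _ _] := @constt_Inertia_bijection _ L N1 t nsLN1.
have /irrP[s Ds] := irrchi.
have /irrP[s2 Ds2] := irr2.
have sA : s \in irr_constt ('Ind['I_N1['chi_t]%G] 'chi_t).
  rewrite constt_Ind_Res -Ds irr_consttE RLc cfdotZl cfdot_irr eqxx mulr1.
  by rewrite Ds irr1_neq0.
have sA2 : s2 \in irr_constt ('Ind['I_N1['chi_t]%G] 'chi_t).
  rewrite constt_Ind_Res -Ds2 irr_consttE RL2 cfdotZl cfdot_irr eqxx mulr1.
  by rewrite Ds2 irr1_neq0.
have irrInd : 'Ind[N1] chi \in irr N1 by rewrite Ds; exact: cA.
have nsZ1N1 : ('Z('Ind[G1] psi1)%CF <| N1)%g := normalS sZ1N1 sN1G1 nsZ1.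
have RZ1i : 'Res['Z('Ind[G1] psi1)%CF] ('Ind[N1] chi) = 'Ind[N1] chi 1%g *: zeta1.
  apply/cfun_inP=> z Zz; rewrite cfResE // cfunE.
  exact: ind_center_val nsZ1N1 sZ1N2 sN2N1 (subset_trans sN1G1 sGI1) RZ1c Zz.
have IndN : 'Ind[tN T] ('Ind[N1] chi) = tpsi T by rewrite cfIndInd.
have e1 : 'Ind[N1] chi = psi1 := II1 zeta1 cz1 _ irrInd RZ1i IndN.
have : s = s2.
  apply: cB => //; rewrite /Ind_Iirr; congr cfIirr.
  by rewrite -Ds -Ds2 e1 Ind2.
by move=> e; rewrite Ds Ds2 e.
Qed.

End Chain.


Section Vanish.
Variable gT : finGroupType.
Implicit Types G H K L M N Y Z Gp Np Hn : {group gT}.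

Definition comm_set (A B C : {set gT}) :=
  [set a in A | [forall b in B, [~ a, b]%g \in C]].

Lemma comm_setP (A B C : {set gT}) a :
  reflect (a \in A /\ forall b, b \in B -> ([~ a, b])%g \in C) (a \in comm_set A B C).
Proof.
rewrite inE; apply: (iffP andP) => [[-> /forall_inP h] // | [-> h]].
by split=> //; apply/forall_inP.
Qed.

Lemma comm_set_group (A : {group gT}) (B : {set gT}) (C : {group gT}) :
  (A \subset 'N(C))%g -> group_set (comm_set A B C).
Proof.
move=> nCA; apply/group_setP; split.
  by apply/comm_setP; split=> // b _; rewrite comm1g.
move=> a a' /comm_setP[Aa ha] /comm_setP[Aa' ha']; apply/comm_setP; split.
  exact: groupM.
move=> b Bb; rewrite commMgJ' groupM ?ha' //.
by rewrite memJ_norm ?ha // (subsetP nCA).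
Qed.

Lemma comm_set_norm (A : {group gT}) (B : {set gT}) (C : {group gT}) g :
  g \in 'N(A)%g -> g \in 'N(C)%g -> (forall b, b \in B -> (b ^ g^-1)%g \in B) ->
  g \in 'N(comm_set A B C)%g.
Proof.
move=> nAg nCg hB; apply/normP/eqP; rewrite eqEcard cardJg leqnn andbT.
apply/subsetP=> x; rewrite mem_conjg => /comm_setP[Ax hx].
apply/comm_setP; split; first by rewrite -(memJ_norm _ (groupVr nAg)).
move=> b Bb; rewrite -(memJ_norm _ (groupVr nCg)) conjRg; exact: hx _ (hB b Bb).
Qed.


Lemma vanish Gp Z (zeta : 'CF(Z)) :
  (Z <| Gp)%g -> zeta \is a linear_char -> (Gp \subset 'I[zeta])%g ->
  forall n M (phi : 'CF(M)), (#|M| <= n)%N -> (M <| Gp)%g -> Z \subset M ->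
  nilpotent (M / Z)%g -> phi \in irr M -> 'Res[Z] phi = phi 1%g *: zeta ->
  (forall L, (L <| Gp)%g -> L \subset M -> forall lam : 'CF(L),
      lam \is a linear_char -> '['Res[L] phi, lam] != 0 -> L \subset Z) ->
  forall x, x \in M -> x \notin Z -> phi x = 0.
Proof.
move=> nsZG Lz sGI; elim=> [|n IHn] M phi leMn nsMG sZM nilM irrphi Rphi hP x Mx Zx.
  by move: leMn; rewrite leqNgt cardG_gt0.
have [sZG nZG] := andP nsZG; have [sMG nMG] := andP nsMG.
have nZM := subset_trans sMG nZG.
have sDZ : cfker zeta \subset Z := cfker_sub zeta.
have Dz : forall y, y \in Z -> (y \in cfker zeta) = (zeta y == 1).
  by move=> y Zy; rewrite cfkerEchar ?lin_charW // inE Zy lin_char1.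
have nDG : Gp \subset 'N(cfker zeta)%g.
  apply/subsetP=> g Gg; have Ig := subsetP sGI g Gg; have nZg := subsetP nZG g Gg.
  by apply/normP; rewrite -(cfker_conjg _ nZg) (inertiaJ Ig).
have nDM := subset_trans sMG nDG.
pose K := Group (comm_set_group M nZM).
have sKM : K \subset M by apply/subsetP=> k /comm_setP[].
have nKG : Gp \subset 'N(K)%g.
  apply/subsetP=> g Gg; apply: comm_set_norm; rewrite ?(subsetP nMG) ?(subsetP nZG) //.
  by move=> b Mb; rewrite memJ_norm // groupV (subsetP nMG).
pose R := Group (comm_set_group M (subset_trans sKM nDM)).
have sRK : R \subset K by apply/subsetP=> k /comm_setP[].
have nRG : Gp \subset 'N(R)%g.
  apply/subsetP=> g Gg; apply: comm_set_norm; rewrite ?(subsetP nKG) ?(subsetP nDG) //.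
  by move=> b Mb; rewrite memJ_norm // groupV (subsetP nMG).
pose U := Group (comm_set_group K nDM).
have sUM : U \subset M by apply/subsetP=> k /comm_setP[].
have nUG : Gp \subset 'N(U)%g.
  apply/subsetP=> g Gg; apply: comm_set_norm; rewrite ?(subsetP nMG) ?(subsetP nDG) //.
  by move=> b Kb; rewrite memJ_norm // groupV (subsetP nKG).
have [k0 Kk0 Zk0] : exists2 k0, k0 \in K & k0 \notin Z.
  have ntM : (M / Z)%g != 1%g.
    apply/trivgPn; exists (coset Z x); first exact: mem_quotient.
    apply: contra Zx => /eqP h; exact: coset_idr (subsetP nZM x Mx) h.
  have ntZ : 'Z(M / Z)%g != 1%g by rewrite center_nil_eq1.
  have [c Zc nc] := trivgPn _ ntZ.
  have /centerP[Mc cc] := Zc.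
  case/morphimP: Mc => k0 Nk0 Mk0 Dc.
  exists k0.
    apply/comm_setP; split=> // m Mm.
    have Nm := subsetP nZM m Mm.
    apply: coset_idr; first by rewrite groupR.
    rewrite morphR //= -Dc; apply/eqP/commgP; apply: cc.
    exact: mem_quotient.
  by apply: contra nc => Zk; rewrite Dc /= coset_id.
have sRM := subset_trans sRK sKM.
have sRZ : R \subset Z.
  have nsRG : (R <| Gp)%g by rewrite /normal (subset_trans sRM sMG) nRG.
  have /irrP[j Dj] := irrphi.
  have [i Hi] := constt_cfRes_irr R j.
  apply: (hP R nsRG sRM 'chi_i); last by rewrite Dj.
  have hR : 'Res[cfker zeta] phi = phi 1%g *: 'Res[cfker zeta] zeta.
    by rewrite -(cfResRes phi sDZ sZM) Rphi linearZ.
  have sDR : cfker zeta \subset R.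
    apply/subsetP=> d Dd; have Zd := subsetP sDZ d Dd.
    apply/comm_setP; split.
      apply/comm_setP; split; first exact: subsetP sZM d Zd.
      move=> m Mm; rewrite commgEl groupM ?groupV // memJ_norm //.
      exact: subsetP nZM m Mm.
    move=> m Mm; rewrite commgEl groupM ?groupV // memJ_norm //.
    exact: subsetP nDM m Mm.
  have hRi := res_scal_trans (irrWchar irrphi) sDR sRM (cfRes_lin_char _ Lz) hR.
  rewrite Dj in hRi; have {}hRi := hRi i Hi.
  rewrite lin_irr_der1 gen_subG; apply/subsetP=> _ /imset2P[r r' Rr Rr' ->].
  have Dc : ([~ r, r'])%g \in cfker zeta.
    by case/comm_setP: Rr => _; apply; exact: subsetP sRM r' Rr'.
  suff : ([~ r, r'])%g \in cfker 'chi[R]_i by []. rewrite cfkerEirr inE -(cfResE _ sDR Dc) hRi cfunE cfResE //.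
  have := Dc; rewrite Dz ?(subsetP sDZ) // => /eqP->.
  by rewrite mulr1.
have ltUM : (#|U| < #|M|)%N.
  apply: proper_card; rewrite properE sUM /=.
  apply/negP=> sMU; case/negP: Zk0; apply: (subsetP sRZ).
  apply/comm_setP; split=> // m Mm.
  case/comm_setP: (subsetP sMU m Mm) => _ /(_ k0 Kk0) h.
  by rewrite -invgR groupV.
have nZx := subsetP nZM x Mx.
case Ux: (x \in U).
  have leUn : (#|U| <= n)%N by rewrite -ltnS (leq_trans ltUM leMn).
  have nsUG : (U <| Gp)%g by rewrite /normal (subset_trans sUM sMG) nUG.
  have sZU : Z \subset U.
    apply/subsetP=> z Zz; apply/comm_setP; split; first exact: subsetP sZM z Zz.
    move=> k Kk; have Gk := subsetP (subset_trans sKM sMG) k Kk.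
    have Zc : ([~ z, k])%g \in Z.
      by rewrite commgEl groupM ?groupV // memJ_norm // (subsetP nZG).
    rewrite Dz // commgEl lin_charM ?groupV ?memJ_norm ?(subsetP nZG) //.
    by rewrite (inertia_valJ _ (subsetP sGI k Gk)) -lin_charM ?groupV // mulVg lin_char1.
  have nilU : nilpotent (U / Z)%g := nilpotentS (quotientS Z sUM) nilM.
  rewrite -(cfResE phi sUM Ux) (cfun_sum_constt ('Res[U] phi)) sum_cfunE big1 // => i Hi.
  rewrite cfunE (IHn U 'chi_i leUn nsUG sZU nilU (mem_irr i) _ _ x Ux Zx) ?mulr0 //.
    exact: res_scal_trans (irrWchar irrphi) sZU sUM Lz Rphi Hi.
  move=> L nsL sLU lam Llam nz.
  apply: (hP L nsL (subset_trans sLU sUM) lam Llam).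
  have /irrP[k Dk] := lin_char_irr Llam; rewrite Dk in nz *.
  have := constt_Res_trans (cfRes_char U (irrWchar irrphi)) Hi nz.
  by rewrite cfResRes.
have [k Kk nDk] : exists2 k, k \in K & ([~ x, k])%g \notin cfker zeta.
  move/negbT: Ux; rewrite inE Mx /= => /forall_inPn[k Kk nk].
  by exists k.
have Mk := subsetP sKM k Kk.
have Zc : ([~ x, k])%g \in Z.
  rewrite -invgR groupV; case/comm_setP: Kk => _; apply; exact: Mx.
have e : phi x = zeta ([~ x, k])%g * phi x.
  by rewrite -(res_scal_mul (irrWchar irrphi) sZM Lz Rphi Mx Zc) -{1}(cfunJ phi x Mk) commgEl mulKVg.
apply/eqP; apply: contraR nDk => nz; rewrite Dz //; apply/eqP.
by apply: (mulIf nz); rewrite mul1r -e.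
Qed.

End Vanish.


Lemma linred_Inv (gT : finGroupType) (T T' : triple gT) :
  is_triple T -> linred T T' -> Inv T T'.
Proof.
move=> wT; elim=> [|T1 T2 _ IH d]; first exact: Inv_refl.
exact: Inv_step IH d.
Qed.

Lemma limit_P (gT : finGroupType) (T T' : triple gT) :
  is_triple T' -> linear_limit T T' ->
  forall L : {group gT}, (L <| tG T')%g -> L \subset tN T' ->
  forall lam : 'CF(L), lam \is a linear_char ->
  '['Res[L] (tpsi T'), lam] != 0 -> L \subset tcenter T'.
Proof.
move=> [nsN' irr'] [_ lim] L nsLG sLN lam Llam nz.
have /irrP[t Dt] := lin_char_irr Llam; subst lam.
have nsLN : (L <| tN T')%g := normalS sLN (normal_sub nsN') nsLG.
have /irrP[r Dr] := irr'.
have [cA _ cImg _ _] := @constt_Inertia_bijection _ L (tN T') t nsLN.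
have rB : r \in irr_constt ('Ind[tN T'] 'chi_t) by rewrite constt_Ind_Res -Dr.
have := cImg r; rewrite rB => /imsetP[s sA Drs].
have Ds : 'Ind[tN T'] 'chi_s = tpsi T' by rewrite Dr Drs /Ind_Iirr cfIirrE // cA.
pose T'' := @Triple gT ('I_(tG T')['chi_t])%G ('I_(tN T')['chi_t])%G 'chi_s.
have d : direct_linred T' T''.
  exists L, 'chi_t; split=> //; split=> //=.
  - exact: mem_irr.
  - by have := sA; rewrite constt_Ind_Res irr_consttE.
have e := lim T'' d.
have sGI : (tG T' \subset 'I['chi_t])%g.
  have eG : gval (tG T'') = gval (tG T') by rewrite e.
  by rewrite -eG subsetIr.
have sNI := subset_trans (normal_sub nsN') sGI.
have RL := res_invariant_scal nsLN sNI Llam irr' nz.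
exact: ind_center_sub (irrWchar irr') Llam nsLG sLN (normal_sub nsN') sGI RL.
Qed.

Theorem proposition3p7 (gT : finGroupType) (T T' : triple gT)
  (zeta : 'CF(tcenter T')) :
  is_triple T -> linred T T' ->
  zeta \is a linear_char -> lies_under zeta ('Ind[tG T'] (tpsi T')) ->
  [/\ tG T' :=: 'I_(tG T)[zeta]%g,
      tN T' :=: 'I_(tN T)[zeta]%g,
      [/\ tpsi T' \in irr (tN T'), lies_under zeta (tpsi T'),
          'Ind[tN T] (tpsi T') = tpsi T &
          forall chi : 'CF(tN T'), chi \in irr (tN T') ->
            lies_under zeta chi -> 'Ind[tN T] chi = tpsi T -> chi = tpsi T'] &
      (linear_limit T T' -> nilpotent (tN T' / tcenter T')%g ->
       forall chi : 'CF(tN T'), chi \in irr (tN T') ->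
         lies_under zeta chi -> chi = tpsi T')].
Proof.
move=> wT lr Lz uz.
have [[nsN' irr'] sG' eN' Ind' [I' II']] := linred_Inv wT lr.
have Dz : 'Res[tcenter T'] ('Ind[tG T'] (tpsi T')) = 'Ind[tG T'] (tpsi T') 1%g *: zeta.
  exact: central_char (cfInd_char _ (irrWchar irr')) Lz uz.
have cz : @central_chr _ T' zeta by [].
have sGI := central_inertia nsN' irr' Dz.
have RZ := central_res nsN' irr' Lz Dz.
have sZN := center_subN nsN' irr'.
have sNI := subset_trans (normal_sub nsN') sGI.
have nsZN : (tcenter T' <| tN T')%g := normalS sZN (normal_sub nsN') (cfcenter_normal _).
have scal : forall chi : 'CF(tN T'), chi \in irr (tN T') -> lies_under zeta chi ->
    'Res[tcenter T'] chi = chi 1%g *: zeta.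
  by move=> chi irrchi uchi; exact: res_invariant_scal nsZN sNI Lz irrchi uchi.
have eG : tG T' :=: 'I_(tG T)[zeta]%g.
  apply/eqP; rewrite eqEsubset subsetI sG' sGI /=.
  apply/subsetP=> g /setIP[Gg /setIdP[nZg /eqP zg]].
  exact (I' zeta cz _ zeta g (subxx _) (cfRes_id _) Gg nZg zg).
have sNG := normal_sub wT.1.
split=> //.
- by rewrite eN' eG setIA (setIidPl sNG).
- split=> //.
  + rewrite /lies_under RZ cfdotZl irrWnorm ?lin_char_irr // mulr1.
    by have /irrP[i ->] := irr'; rewrite irr1_neq0.
  + move=> chi irrchi uchi Ichi; exact: II' zeta cz chi irrchi (scal chi irrchi uchi) Ichi.
move=> [_ lim] nil chi irrchi uchi.
have hP := limit_P (conj nsN' irr') (conj lr lim).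
have van : forall x, x \in tN T' -> x \notin tcenter T' -> tpsi T' x = 0.
  exact: (vanish (cfcenter_normal _) Lz sGI (leqnn _) nsN' sZN nil irr' RZ hP).
have Rc := scal chi irrchi uchi.
have /irrP[a Da] := irrchi; have /irrP[b Db] := irr'.
suff : '[chi, tpsi T'] != 0.
  by rewrite Da Db cfdot_irr pnatr_eq0 eqb0 negbK => /eqP->.
rewrite cfdotE mulf_eq0 negb_or invr_eq0 neq0CG /=.
rewrite (big_setID (tcenter T')) /= (setIidPr sZN) [X in _ + X]big1 ?addr0; last first.
  by move=> x /setDP[Nx Zx]; rewrite van // conjC0 mulr0.
rewrite (eq_bigr (fun _ => chi 1%g * tpsi T' 1%g)) ?sumr_const; last first.
  move=> x Zx.
  rewrite -(cfResE chi sZN Zx) -(cfResE (tpsi T') sZN Zx) Rc RZ !cfunE rmorphM /=.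
  rewrite mulrACA -normCK (normC_lin_char Lz Zx) expr1n mulr1.
  by rewrite Db irr1_degree conjC_nat.
rewrite mulrn_eq0 negb_or -lt0n cardG_gt0 /= mulf_neq0 //.
  by rewrite Da irr1_neq0.
by rewrite Db irr1_neq0.
Qed.
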